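(* Let $G$ be a connected simple graph with $v$ vertices and $|E|$ edges, and let $p_1=|E|-v+1$. Then $H^{1,v-1}_{\mathcal A_2}(G)\cong\mathbb Z^{p_1}$ if $G$ is bipartite, and $H^{1,v-1}_{\mathcal A_2}(G)\cong\mathbb Z^{p_1-1}\oplus\mathbb Z_2$ if $G$ has an odd cycle.
   Context: $\mathcal A_2=\mathbb Z[x]/(x^2)$. For a finite graph $G$ with a fixed total order on its edge set $E(G)$ and $s\subseteq E(G)$, $[G:s]$ is the spanning subgraph with edge set $s$. An enhanced state is a pair $(s,c)$ where $c$ assigns to each component $C$ of $[G:s]$ an exponent $c(C)\in\{0,1\}$ (weight $x^{c(C)}$); its bidegree is $(|s|,\sum_C c(C))$. $C^{i,j}_{\mathcal A_2}(G)$ is the free abelian group on enhanced states of bidegree $(i,j)$, with differential $d=\sum_{e\notin s}(-1)^{|\{f\in s:f<e\}|}d_e$, where $d_e(s,c)$ is the enhanced state on $s\cup\{e\}$ obtained, if $e$ joins distinct components $C_1,C_2$, by giving the merged component weight $x^{c(C_1)}x^{c(C_2)}\in\mathcal A_2$ (zero if the exponent sum is $\ge2$), other weights unchanged, and, if both endpoints of $e$ lie in one component, by keeping all weights. $H^{i,j}_{\mathcal A_2}(G)$ is its cohomology. *)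

(* Defs.v *)
From HB Require Import structures.
From mathcomp Require Import all_boot all_order all_algebra.
Set Implicit Arguments. Unset Strict Implicit. Unset Printing Implicit Defensive.
Import GRing.Theory.
Local Open Scope ring_scope.

(* A finite graph: vertex type V, m edges indexed by 'I_m (the ordinal order on
   'I_m is the fixed total order on E(G)), edge k has endpoints ends k. *)

Definition simple_graph (V : finType) (m : nat) (ends : 'I_m -> V * V) : Prop :=
  (forall k, (ends k).1 != (ends k).2) /\
  (forall k l, (ends k == ends l) || (ends k == ((ends l).2, (ends l).1)) -> k = l).

Definition adj (V : finType) (m : nat) (ends : 'I_m -> V * V) (s : {set 'I_m}) : rel V :=
  fun x y => [exists k in s, (ends k == (x, y)) || (ends k == (y, x))].

Definition connected_graph (V : finType) (m : nat) (ends : 'I_m -> V * V) : Prop :=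
  forall x y, connect (adj ends setT) x y.

Definition bipartite (V : finType) (m : nat) (ends : 'I_m -> V * V) : Prop :=
  exists col : V -> bool, forall k, col (ends k).1 != col (ends k).2.

Definition has_odd_cycle (V : finType) (m : nat) (ends : 'I_m -> V * V) : Prop :=
  exists p : seq V, [/\ uniq p, odd (size p), (3 <= size p)%N & cycle (adj ends setT) p].

(* Enhanced states are encoded as pairs (s, c) with c : V -> bool constant on
   the components of [G:s] (c x = exponent of the weight of the component of x). *)
Definition St (V : finType) (m : nat) := ({set 'I_m} * {ffun V -> bool})%type.

Definition valid_state (V : finType) (m : nat) (ends : 'I_m -> V * V) (u : St V m) : bool :=
  [forall x, forall y, connect (adj ends u.1) x y ==> (u.2 x == u.2 y)].

(* second degree: sum over components of the exponents *)
Definition jdeg (V : finType) (m : nat) (ends : 'I_m -> V * V) (u : St V m) : nat :=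
  #|[set x | roots (adj ends u.1) x && u.2 x]|.

Definition dstate (V : finType) (m : nat) (ends : 'I_m -> V * V) (k : 'I_m)
    (u : St V m) : option (St V m) :=
  let s := u.1 in let c := u.2 in
  let x := (ends k).1 in let y := (ends k).2 in
  let s' := k |: s in
  if connect (adj ends s) x y then Some (s', c)
  else if c x && c y then None
  else Some (s', [ffun z => if connect (adj ends s') z x then c x || c y else c z]).

Definition dcoef (V : finType) (m : nat) (ends : 'I_m -> V * V) (u t : St V m) : int :=
  \sum_(k < m | k \notin u.1)
     (if dstate ends k u == Some t then (-1) ^+ #|[set f in u.1 | (f < k)%N]| else 0).

Definition Chain (V : finType) (m : nat) := {ffun St V m -> int}.

Definition dif (V : finType) (m : nat) (ends : 'I_m -> V * V) (f : Chain V m) : Chain V m :=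
  [ffun t => \sum_(u : St V m) f u * dcoef ends u t].

Definition inC (V : finType) (m : nat) (ends : 'I_m -> V * V) (i j : nat) (f : Chain V m) : Prop :=
  forall u, f u != 0 -> [&& valid_state ends u, #|u.1| == i & jdeg ends u == j].

Definition cocycle (V : finType) (m : nat) (ends : 'I_m -> V * V) (i j : nat) (f : Chain V m) : Prop :=
  inC ends i j f /\ dif ends f = 0.

Definition coboundary (V : finType) (m : nat) (ends : 'I_m -> V * V) (i j : nat) (f : Chain V m) : Prop :=
  if i is i'.+1 then exists g, inC ends i' j g /\ dif ends g = f else f = 0.

(* H^{i,j}(G) = Z^{i,j}/B^{i,j} is isomorphic to A : an additive surjection from
   the cocycles onto A whose kernel is exactly the coboundaries *)
Definition H_iso (V : finType) (m : nat) (ends : 'I_m -> V * V) (i j : nat) (A : zmodType) : Prop :=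
  exists phi : Chain V m -> A,
    [/\ forall f g, cocycle ends i j f -> cocycle ends i j g -> phi (f - g) = phi f - phi g,
        forall a, exists2 f, cocycle ends i j f & phi f = a
      & forall f, cocycle ends i j f -> (phi f = 0 <-> coboundary ends i j f)].

(* Main.v *)
Require Import Defs.
From mathcomp Require Import all_boot all_order all_algebra.
From mathcomp Require Import ring zify.
Set Implicit Arguments. Unset Strict Implicit. Unset Printing Implicit Defensive.
Import GRing.Theory.

Section Z2.
Local Open Scope ring_scope.
Lemma Z2_2 : (2%:~R : 'Z_2) = 0.
Proof. exact: (@pchar_Zp 2). Qed.
Lemma Z2_int (n : int) : (n%:~R : 'Z_2) = 0 -> exists t : int, n = 2 * t.
Proof.
case: n => k.
  change ((k%:R : 'Z_2) = 0 -> exists t : int, k%:Z = 2 * t).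
  move=> /(congr1 val); rewrite /= val_Zp_nat //= => Hk.
  exists (k %/ 2)%N; rewrite -[2]/(Posz 2) -PoszM; congr Posz.
  by rewrite [LHS](divn_eq k 2) Hk addn0 mulnC.
rewrite NegzE mulrNz => /eqP; rewrite oppr_eq0 => /eqP.
change ((k.+1%:R : 'Z_2) = 0 -> exists t : int, - k.+1%:Z = 2 * t).
move=> /(congr1 val); rewrite /= val_Zp_nat //= => Hk.
exists (- (k.+1 %/ 2)%N%:Z); rewrite mulrN; congr (- _).
rewrite -[2]/(Posz 2) -PoszM; congr Posz.
by rewrite [LHS](divn_eq k.+1 2) Hk addn0 mulnC.
Qed.
Lemma pairB (A B : zmodType) (a c : A) (b d : B) : ((a, b) - (c, d)) = (a - c, b - d).
Proof. by []. Qed.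

End Z2.

Section Tree.
Variables (V : finType) (m : nat) (ends : 'I_m -> V * V).
Hypothesis conn : connected_graph ends.
Variable r : V.

Local Notation E := (adj ends setT).

Fixpoint reach n w : bool :=
  if n is n'.+1 then reach n' w || [exists y, reach n' y && E y w] else w == r.

Lemma reach_mono n n' w : n <= n' -> reach n w -> reach n' w.
Proof.
elim: n' => [|n' IH]; first by rewrite leqn0 => /eqP->.
rewrite leq_eqVlt => /orP[/eqP->//|]; rewrite ltnS => /IH H /H /= ->//.
Qed.

Lemma reach_path x p n : path E x p -> reach n x -> reach (n + size p) (last x p).
Proof.
elim: p x n => [|y p IH] x n /=; first by rewrite addn0.
case/andP=> Exy Hp Hx; rewrite addnS -addSn; apply: IH => //=.
apply/orP; right; apply/existsP; exists x; by rewrite Hx.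
Qed.

Lemma exreach w : exists n, reach n w.
Proof.
have /connectP[p Hp ->] := conn r w.
exists (0 + size p); apply: reach_path => //=.
Qed.

Definition dep w := ex_minn (exreach w).

Lemma dep_reach w : reach (dep w) w.
Proof. by rewrite /dep; case: ex_minnP. Qed.

Lemma dep_min w n : reach n w -> dep w <= n.
Proof. by rewrite /dep; case: ex_minnP => k _ H /H. Qed.

Lemma dep_r : dep r = 0.
Proof. by apply/eqP; rewrite -leqn0; apply: dep_min => /=. Qed.

Definition par w := odflt r [pick y | reach (dep w).-1 y && E y w].

Lemma par_spec w : w != r -> dep w = (dep (par w)).+1 /\ E (par w) w.
Proof.
move=> wr; rewrite /par.
have := dep_reach w; have := @dep_min w.
case: (dep w) => [|n] Hmin /=; first by rewrite (negbTE wr).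
case/orP=> [/Hmin|]; first by rewrite ltnn.
move=> Hex.
case: pickP => [y /andP[Hy Ey]|/= H]; last first.
  by case/existsP: Hex => y /andP[Hy Ey]; move: (H y); rewrite Hy Ey.
split=> //=; congr S; apply/eqP; rewrite eqn_leq (dep_min Hy) andbT.
have : reach (dep y).+1 w.
  apply/orP; right; apply/existsP; by exists y; apply/andP; split => //; apply: dep_reach.
by move/Hmin.
Qed.

Lemma dep_gt0 w : w != r -> 0 < dep w.
Proof. by move/par_spec=> [-> _]. Qed.

Lemma dep0 w : dep w = 0 -> w = r.
Proof. by case: (eqVneq w r) => // /dep_gt0; rewrite lt0n => /eqP. Qed.


Variable k0 : 'I_m.
Local Open Scope ring_scope.

Definition joins k x y := (ends k == (x, y)) || (ends k == (y, x)).

Lemma adj_joins x y : E x y -> exists k, joins k x y.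
Proof. by case/existsP=> k /andP[_ H]; exists k. Qed.

Definition pe w := odflt k0 [pick k | joins k (par w) w].

Lemma pe_spec w : w != r -> joins (pe w) (par w) w.
Proof.
move=> /par_spec[_ /adj_joins[k Hk]]; rewrite /pe.
by case: pickP => [k' //|/(_ k)]; rewrite Hk.
Qed.

Definition Mvec (a : V -> int) k : int := a (ends k).1 + a (ends k).2.

Lemma Mvec_joins a k x y : joins k x y -> Mvec a k = a x + a y.
Proof. by rewrite /Mvec /joins => /orP[]/eqP->//=; rewrite addrC. Qed.

Lemma dep_ind (P : V -> Prop) : P r -> (forall w, w != r -> P (par w) -> P w) -> forall w, P w.
Proof.
move=> Pr Ps w; move: {2}(dep w) (erefl (dep w)) => n; elim: n w => [|n IH] w.
  by move/dep0->.
move=> Hw; have wr : w != r by apply/eqP=> E'; move: Hw; rewrite E' dep_r.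
apply: Ps => //; apply: IH; have [+ _] := par_spec wr; rewrite Hw; by case.
Qed.

Fixpoint potn (h : 'I_m -> int) n w : int :=
  if n is n'.+1 then h (pe w) - potn h n' (par w) else 0.

Definition pot h w := potn h (dep w) w.

Lemma pot_r h : pot h r = 0.
Proof. by rewrite /pot dep_r. Qed.

Lemma pot_rec h w : w != r -> pot h w = h (pe w) - pot h (par w).
Proof. by move/par_spec=> [Hd _]; rewrite /pot Hd. Qed.

Definition eps w : int := if odd (dep w) then -1 else 1.

Lemma eps_rec w : w != r -> eps w = - eps (par w).
Proof. by move/par_spec=> [Hd _]; rewrite /eps Hd /=; case: odd; rewrite ?opprK. Qed.

Lemma eps_r : eps r = 1.
Proof. by rewrite /eps dep_r. Qed.

Lemma pot_ext h1 h2 w : (forall k, h1 k = h2 k) -> pot h1 w = pot h2 w.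
Proof.
move=> H; elim/dep_ind: w => [|w wr IH]; first by rewrite !pot_r.
by rewrite (pot_rec h1 wr) (pot_rec h2 wr) IH H.
Qed.

Lemma pot_sub (h1 h2 : 'I_m -> int) w : pot (fun k => h1 k - h2 k) w = pot h1 w - pot h2 w.
Proof.
elim/dep_ind: w => [|w wr IH]; first by rewrite !pot_r subr0.
by rewrite (pot_rec _ wr) (pot_rec h1 wr) (pot_rec h2 wr) IH; ring.
Qed.

Lemma pot_M b w : pot (Mvec b) w = b w - eps w * b r.
Proof.
elim/dep_ind: w => [|w wr IH]; first by rewrite pot_r eps_r mul1r subrr.
rewrite (pot_rec _ wr) IH (Mvec_joins _ (pe_spec wr)) (eps_rec wr); ring.
Qed.

Lemma pot_zero h w : (forall w, w != r -> h (pe w) = 0) -> pot h w = 0.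
Proof.
move=> H; elim/dep_ind: w => [|w wr IH]; first by rewrite pot_r.
by rewrite pot_rec // IH H // subrr.
Qed.

Definition R h k : int := h k - Mvec (pot h) k.

Lemma R_T h w : w != r -> R h (pe w) = 0.
Proof.
move=> wr; rewrite /R (Mvec_joins _ (pe_spec wr)) (pot_rec _ wr).
ring.
Qed.

Lemma R_M b k : R (Mvec b) k = (eps (ends k).1 + eps (ends k).2) * b r.
Proof.
rewrite /R [Mvec (pot _) k]/Mvec !pot_M /Mvec; ring.
Qed.

Lemma R_sub (h1 h2 : 'I_m -> int) k : R (fun k => h1 k - h2 k) k = R h1 k - R h2 k.
Proof.
rewrite /R /Mvec !pot_sub; ring.
Qed.

Lemma R_ext h1 h2 k : (forall k, h1 k = h2 k) -> R h1 k = R h2 k.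
Proof. by move=> H; rewrite /R /Mvec !(pot_ext _ H) H. Qed.

Lemma R_zero h k : (forall w, w != r -> h (pe w) = 0) -> R h k = h k.
Proof. move=> H; rewrite /R /Mvec !(pot_zero _ H); ring. Qed.

Definition Tset := [set pe w | w in [set w | w != r]].

Lemma pe_inj : {in [set w | w != r] &, injective pe}.
Proof.
move=> w w'; rewrite !inE => wr wr' He.
have := pe_spec wr; have := pe_spec wr'; rewrite He /joins.
have [Hd _] := par_spec wr; have [Hd' _] := par_spec wr'.
case/orP=> /eqP-> /orP[]/eqP [] => // E1 E2; try congruence.
all: have [P1 P2] : par w = w' /\ par w' = w by split; congruence.
all: rewrite P1 in Hd; rewrite P2 in Hd'; exfalso; lia.
Qed.

Lemma card_T : #|Tset| = (#|V| - 1)%N.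
Proof.
rewrite card_in_imset; last exact: pe_inj.
rewrite subn1 -(cardsC1 r); apply: eq_card => w; by rewrite !inE.
Qed.

Lemma eps_T w : w != r -> eps (ends (pe w)).1 + eps (ends (pe w)).2 = 0.
Proof.
move=> wr; have := pe_spec wr; rewrite /joins.
by case/orP=> /eqP-> /=; rewrite (eps_rec wr); ring.
Qed.


Lemma inT w : w != r -> pe w \in Tset.
Proof. by move=> wr; apply/imsetP; exists w; rewrite ?inE. Qed.

Lemma Tset_pe k : k \in Tset -> exists2 w, w != r & k = pe w.
Proof. by case/imsetP=> w; rewrite inE => wr ->; exists w. Qed.

Lemma eps_bip : bipartite ends -> forall k, eps (ends k).1 + eps (ends k).2 = 0.
Proof.
case=> col Hcol.
have He : forall w, eps w = if col w == col r then 1 else -1.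
  elim/dep_ind => [|w wr IH]; first by rewrite eps_r eqxx.
  rewrite (eps_rec wr) IH.
  have : col (par w) != col w.
    by case/orP: (pe_spec wr) => /eqP He; move: (Hcol (pe w)); rewrite He //= eq_sym.
  by case: (col w); case: (col (par w)); case: (col r).
move=> k; rewrite !He; move: (Hcol k).
by case: (col (ends k).1); case: (col (ends k).2); case: (col r).
Qed.

Lemma bip_no_odd : bipartite ends -> has_odd_cycle ends -> False.
Proof.
case=> col Hcol [p [_ Hodd _ Hc]].
have Hadj x y : E x y -> col x != col y.
  by case/adj_joins=> k /orP[]/eqP He; move: (Hcol k); rewrite He //= eq_sym.
have Hp : forall x q, path E x q -> col (last x q) = col x (+) odd (size q).
  move=> x q; elim: q x => [|y q IH] x /=; first by rewrite addbF.
  case/andP=> /Hadj Hxy /IH ->; move: Hxy.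
  by case: (col x); case: (col y); case: (odd _).
case: p Hodd Hc => [//|x p] /= Hodd Hc.
have := Hp _ _ Hc; rewrite last_rcons size_rcons /= Hodd.
by case: (col x).
Qed.

Lemma odd_edge : has_odd_cycle ends ->
  exists k, (k \notin Tset) && (odd (dep (ends k).1) == odd (dep (ends k).2)).
Proof.
move=> Ho.
case: (boolP [exists k, odd (dep (ends k).1) == odd (dep (ends k).2)]).
  case/existsP=> k Hk; exists k; rewrite Hk andbT; apply/negP=> /Tset_pe[w wr Hw].
  move: Hk; have := pe_spec wr; rewrite -Hw /joins => /orP[]/eqP-> /=;
  have [-> _] := par_spec wr; by rewrite /=; case: odd.
rewrite negb_exists => /forallP H; exfalso; apply: (bip_no_odd _ Ho).
by exists (fun w => odd (dep w)).
Qed.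

Definition idx (S : {set 'I_m}) n (eq : n = #|S|) (i : 'I_n) : 'I_m :=
  enum_val (cast_ord eq i).

Lemma idx_in (S : {set 'I_m}) n (eq : n = #|S|) i : idx eq i \in S.
Proof. exact: enum_valP. Qed.

Lemma idx_inj (S : {set 'I_m}) n (eq : n = #|S|) : injective (idx eq).
Proof. by move=> i j /enum_val_inj /cast_ord_inj. Qed.

Lemma idx_onto (S : {set 'I_m}) n (eq : n = #|S|) k : k \in S -> exists i, idx eq i = k.
Proof.
move=> kS; exists (cast_ord (esym eq) (enum_rank_in kS k)).
by rewrite /idx cast_ordKV enum_rankK_in.
Qed.


Lemma card_pos : (0 < #|V|)%N.
Proof. by apply/card_gt0P; exists r. Qed.

Lemma cardN : (m + 1 - #|V|)%N = #|~: Tset|.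
Proof.
have := cardsC Tset; rewrite card_T card_ord => H.
have := card_pos; lia.
Qed.

Definition coker_iso (A : zmodType) :=
 exists Phi : ('I_m -> int) -> A,
 [/\ forall h1 h2, (forall k, h1 k = h2 k) -> Phi h1 = Phi h2,
     forall h1 h2, Phi (fun k => h1 k - h2 k) = Phi h1 - Phi h2,
     forall z, exists h, Phi h = z &
     forall h, Phi h = 0 <-> exists a, forall k, h k = Mvec a k].

Lemma R_decomp h k : h k = R h k + Mvec (pot h) k.
Proof. by rewrite /R subrK. Qed.

Lemma coker_bip : bipartite ends -> coker_iso 'rV[int]_(m + 1 - #|V|).
Proof.
move=> Hb.
exists (fun h => \row_i R h (idx cardN i)); split.
- by move=> h1 h2 H; apply/rowP=> i; rewrite !mxE (R_ext _ H).
- by move=> h1 h2; apply/rowP=> i; rewrite !mxE R_sub.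
- move=> z; exists (fun k => \sum_(i | idx cardN i == k) z 0 i).
  apply/rowP=> i; rewrite mxE R_zero.
    by rewrite (big_pred1 i) // => j; rewrite /= (inj_eq (@idx_inj _ _ _)).
  move=> w wr; rewrite big_pred0 // => j; apply/negP=> /eqP Hj.
  by have := idx_in cardN j; rewrite Hj inE inT.
- move=> h; split.
    move/rowP=> H; exists (pot h) => k; rewrite R_decomp.
    suff -> : R h k = 0 by rewrite add0r.
    case: (boolP (k \in Tset)) => [/Tset_pe[w wr ->]|kN]; first exact: R_T.
    have kN' : k \in ~: Tset by rewrite inE.
    have [i <-] := idx_onto cardN kN'.
    by have := H i; rewrite !mxE.
  case=> a Ha; apply/rowP=> i; rewrite !mxE (R_ext _ Ha) R_M eps_bip //.
  by rewrite mul0r.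
Qed.


Definition sigma k : int :=
  if odd (dep (ends k).1) == odd (dep (ends k).2) then eps (ends k).1 else 0.

Lemma eps_sum k : eps (ends k).1 + eps (ends k).2 = 2 * sigma k.
Proof. by rewrite /sigma /eps; case: odd; case: odd. Qed.

Lemma coker_odd : has_odd_cycle ends -> coker_iso ('rV[int]_(m + 1 - #|V| - 1) * 'Z_2)%type.
Proof.
case/odd_edge => e0 /andP[e0N He0].
set N' := (~: Tset) :\ e0.
have cardN' : (m + 1 - #|V| - 1)%N = #|N'|.
  by rewrite cardN (cardsD1 e0 (~: Tset)) inE e0N /= add1n subn1.
set s0 := sigma e0.
have s00 : s0 * s0 = 1 by rewrite /s0 /sigma He0 /eps; case: odd.
have Hin i : idx cardN' i \notin Tset /\ idx cardN' i != e0.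
  by have := idx_in cardN' i; rewrite !inE => /andP[-> ->].
exists (fun h => (\row_i (R h (idx cardN' i) - s0 * sigma (idx cardN' i) * R h e0),
                 (R h e0)%:~R : 'Z_2)); split.
- move=> h1 h2 H; congr pair; last by rewrite (R_ext _ H).
  by apply/rowP=> i; rewrite !mxE !(R_ext _ H).
- move=> h1 h2; rewrite pairB; congr pair; last by rewrite R_sub intrB.
  by apply/rowP=> i; rewrite !mxE !R_sub; ring.
- case=> z b.
  exists (fun k => (if k == e0 then (nat_of_ord b)%:Z else 0) +
            \sum_(i | idx cardN' i == k) (z 0 i + s0 * sigma k * (nat_of_ord b)%:Z)).
  have Hz : forall w, w != r ->
      (fun k => (if k == e0 then (nat_of_ord b)%:Z else 0) +
            \sum_(i | idx cardN' i == k) (z 0 i + s0 * sigma k * (nat_of_ord b)%:Z)) (pe w) = 0.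
    move=> w wr /=; have peT := inT wr.
    have -> : (pe w == e0) = false by apply/negP=> /eqP He; move: e0N; rewrite -He peT.
    rewrite add0r big_pred0 // => j; apply/negP=> /eqP Hj.
    by have [] := Hin j; rewrite Hj peT.
  have He0' : \sum_(i | idx cardN' i == e0) (z 0 i + s0 * sigma e0 * (nat_of_ord b)%:Z) = 0.
    by rewrite big_pred0 // => j; apply/negP=> /eqP Hj; have [] := Hin j; rewrite Hj eqxx.
  congr pair.
    apply/rowP=> i; rewrite !mxE !(R_zero _ Hz) /= eqxx He0' addr0.
    have -> : (idx cardN' i == e0) = false by apply/negP=> /eqP Hj; have [] := Hin i; rewrite Hj eqxx.
    rewrite add0r (big_pred1 i); last by move=> j; rewrite /= (inj_eq (@idx_inj _ _ _)).
    rewrite /s0; ring.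
  rewrite (R_zero _ Hz) /= eqxx He0' addr0.
  change (((nat_of_ord b)%:R : 'Z_2) = b); exact: natr_Zp.
- move=> h; split.
    case=> /rowP H1 /Z2_int [t Ht].
    exists (fun w => pot h w + eps w * (s0 * t)) => k.
    rewrite R_decomp /Mvec /=.
    suff -> : R h k = (eps (ends k).1 + eps (ends k).2) * (s0 * t) by ring.
    case: (boolP (k \in Tset)) => [/Tset_pe[w wr ->]|kN].
      by rewrite R_T // eps_T // mul0r.
    case: (eqVneq k e0) => [->|ke0].
      rewrite eps_sum Ht -/s0.
      by transitivity (2 * (s0 * s0) * t); [rewrite s00 mulr1 | ring].
    have kN' : k \in N' by rewrite !inE ke0.
    have [i <-] := idx_onto cardN' kN'.
    have := H1 i; rewrite !mxE => /eqP; rewrite subr_eq0 => /eqP ->.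
    rewrite eps_sum Ht; ring.
  case=> a Ha; congr pair.
    apply/rowP=> i; rewrite !mxE !(R_ext _ Ha) !R_M !eps_sum -/s0.
    have -> : 2 * sigma (idx cardN' i) * a r - s0 * sigma (idx cardN' i) * (2 * s0 * a r)
      = 2 * sigma (idx cardN' i) * a r * (1 - s0 * s0) by ring.
    by rewrite s00 subrr mulr0.
  by rewrite (R_ext _ Ha) R_M eps_sum -mulrA intrM Z2_2 mul0r.
Qed.

End Tree.

Section States.
Variables (V : finType) (m : nat) (ends : 'I_m -> V * V).
Hypothesis simple : simple_graph ends.

Lemma adj_sym s : symmetric (adj ends s).
Proof.
move=> x y; apply/existsP/existsP=> [][k Hk]; exists k; move: Hk;
by case/andP=> -> /orP[]->; rewrite ?orbT.
Qed.

Lemma csym s : connect_sym (adj ends s).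
Proof. exact/sym_connect_sym/adj_sym. Qed.

Lemma connect_set0 x y : connect (adj ends set0) x y = (x == y).
Proof.
apply/idP/eqP=> [/connectP[[|z p] /= Hp ->]//|->]; last exact: connect0.
by move: Hp => /andP[/existsP[k]]; rewrite inE.
Qed.

Lemma roots_set0 x : roots (adj ends set0) x.
Proof. by have := connect_root (adj ends set0) x; rewrite connect_set0 eq_sym. Qed.

Definition ab e := [:: (ends e).1; (ends e).2].

Lemma adj1 e x y : adj ends [set e] x y -> (x \in ab e) && (y \in ab e).
Proof.
case/existsP=> k /andP[]; rewrite inE => /eqP -> /orP[]/eqP He;
by rewrite /ab He !inE !eqxx ?orbT.
Qed.

Lemma conn1 e x y : connect (adj ends [set e]) x y ->
  (x == y) || ((x \in ab e) && (y \in ab e)).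
Proof.
case/connectP=> p Hp ->; case: p Hp => [|z p] /=; first by rewrite eqxx.
case/andP=> /adj1 /andP[-> Hz] Hp; apply/orP; right.
elim: p z Hz Hp => [|z' p IH] z Hz /=; first by rewrite Hz.
case/andP=> /adj1 /andP[_ Hz'] Hp; exact: IH.
Qed.

Lemma loopfree k : (ends k).1 != (ends k).2.
Proof. by case: simple. Qed.

Lemma adj_e e : adj ends [set e] (ends e).1 (ends e).2.
Proof. by apply/existsP; exists e; rewrite inE -surjective_pairing !eqxx. Qed.

Lemma connect1_simple e k : k != e -> ~~ connect (adj ends [set e]) (ends k).1 (ends k).2.
Proof.
move=> ke; apply/negP=> /conn1; rewrite (negbTE (loopfree k)) /= /ab !inE.
case: simple => Hl Hs.
have Hne := loopfree e.
case/andP=> /orP[]/eqP H1 /orP[]/eqP H2.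
- by move: (loopfree k); rewrite H1 H2 eqxx.
- suff: k = e by move/eqP; rewrite (negbTE ke).
  by apply: Hs; rewrite [ends k]surjective_pairing H1 H2 -surjective_pairing eqxx.
- suff: k = e by move/eqP; rewrite (negbTE ke).
  apply: Hs; apply/orP; right; by rewrite [ends k]surjective_pairing H1 H2.
- by move: (loopfree k); rewrite H1 H2 eqxx.
Qed.


Definition st1 e : St V m := ([set e], [ffun _ => true]).
Definition st0 w : St V m := (set0, [ffun z => z != w]).

Lemma st1_inj : injective st1.
Proof. by move=> e e' [] /setP/(_ e); rewrite !inE eqxx => /esym/eqP. Qed.

Lemma st0_inj : injective st0.
Proof. by move=> w w' [] /ffunP/(_ w); rewrite !ffunE eqxx => /esym/negbFE/eqP. Qed.

Lemma dstate_st1 e k : k != e -> dstate ends k (st1 e) = None.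
Proof. by move=> ke; rewrite /dstate /= (negbTE (connect1_simple ke)) !ffunE. Qed.

Lemma dstate_st0 w k : dstate ends k (st0 w) =
  if (w == (ends k).1) || (w == (ends k).2) then Some (st1 k) else None.
Proof.
rewrite /dstate /= connect_set0 (negbTE (loopfree k)) !ffunE.
have Hxy := loopfree k.
case: (eqVneq w (ends k).1) => [->|wx] /=.
  congr Some; rewrite /st1 setU0; congr pair; apply/ffunP=> z; rewrite !ffunE.
  rewrite eq_sym Hxy; case: ifP => // Hc.
  by apply/negP=> /eqP Hz; move: Hc; rewrite Hz connect0.
case: (eqVneq w (ends k).2) => [->|wy] /=; last by [].
congr Some; rewrite /st1 setU0; congr pair; apply/ffunP=> z; rewrite !ffunE.
case: ifP => // Hc.
apply/negP=> /eqP Hz; move: Hc; rewrite Hz.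
by rewrite (csym [set k]) connect1 // adj_e.
Qed.

Lemma roots1 e : exists2 o, o \in ab e & forall x, roots (adj ends [set e]) x = (x != o).
Proof.
set a := (ends e).1; set b := (ends e).2; set rho := fingraph.root (adj ends [set e]) a.
have Hab : a != b := loopfree e.
have aab : a \in ab e by rewrite !inE eqxx.
have bab : b \in ab e by rewrite !inE eqxx orbT.
have Hrho : rho \in ab e.
  have := conn1 (connect_root (adj ends [set e]) a); rewrite aab /= => /orP[/eqP Ha|//]; by rewrite /rho -Ha.
have Hroot x : x \in ab e -> fingraph.root (adj ends [set e]) x = rho.
  move=> xab; apply/eqP; rewrite root_connect; last exact: csym.
  move: xab; rewrite !inE => /orP[]/eqP-> ; first exact: connect0.
  by rewrite csym; apply: connect1; rewrite adj_e.
have Hout x : x \notin ab e -> roots (adj ends [set e]) x.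
  move=> xn; have := conn1 (connect_root (adj ends [set e]) x).
  by rewrite (negbTE xn) orbF eq_sym.
exists (if rho == a then b else a); first by case: ifP.
move=> x; case: (boolP (x \in ab e)) => xab; last first.
  rewrite Hout //; apply/esym/negP=> /eqP Hx; move: xab; rewrite Hx; by case: ifP; rewrite ?aab ?bab.
rewrite /roots /= Hroot //.
have Hba : b != a by rewrite eq_sym.
move: xab Hrho; rewrite !inE => /orP[]/eqP-> /orP[]/eqP->; rewrite ?eqxx /= ?(negbTE Hab) ?(negbTE Hba) //; by rewrite /a eqxx.
Qed.

Lemma jdeg_st1 e : jdeg ends (st1 e) = (#|V| - 1)%N.
Proof.
have [o _ Ho] := roots1 e.
rewrite /jdeg /= subn1 -(cardsC1 o); apply: eq_card => x; by rewrite !inE ffunE andbT Ho.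
Qed.

Lemma jdeg_st0 w : jdeg ends (st0 w) = (#|V| - 1)%N.
Proof.
rewrite /jdeg /= subn1 -(cardsC1 w); apply: eq_card => x; by rewrite !inE ffunE roots_set0.
Qed.

Lemma valid_st1 e : valid_state ends (st1 e).
Proof. by apply/forallP=> x; apply/forallP=> y; rewrite !ffunE eqxx implybT. Qed.

Lemma valid_st0 w : valid_state ends (st0 w).
Proof. by apply/forallP=> x; apply/forallP=> y; rewrite connect_set0; apply/implyP=> /eqP->. Qed.

Lemma class1 u : valid_state ends u -> #|u.1| = 1%N -> jdeg ends u = (#|V| - 1)%N ->
  exists e, u = st1 e.
Proof.
case: u => s c /= Hv /eqP /cards1P [e Hs] Hj; subst s; exists e; rewrite /st1; congr pair.
have [o _ Ho] := roots1 e.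
set S := [set x | roots (adj ends [set e]) x && c x].
have HS : S = [set~ o].
  apply/eqP; rewrite eqEcard; apply/andP; split.
    by apply/subsetP=> x; rewrite !inE Ho => /andP[].
  by rewrite cardsC1 -subn1 -Hj.
apply/ffunP=> z; rewrite ffunE.
have Hr : fingraph.root (adj ends [set e]) z \in S.
  rewrite HS !inE -Ho; exact: roots_root (csym _) _.
move: Hr; rewrite inE => /andP[_ Hc].
move: Hv => /forallP/(_ z)/forallP/(_ (fingraph.root (adj ends [set e]) z)).
by rewrite connect_root /= Hc => /eqP.
Qed.

Lemma class0 u : (0 < #|V|)%N -> valid_state ends u -> #|u.1| = 0%N ->
  jdeg ends u = (#|V| - 1)%N -> exists w, u = st0 w.
Proof.
case: u => s c /= Vpos Hv /cards0_eq -> Hj.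
have HA : #|[set x | c x]| = (#|V| - 1)%N.
  by rewrite -Hj /jdeg; apply: eq_card => x; rewrite !inE roots_set0.
have : #|~: [set x | c x]| == 1%N.
  by have := cardsC [set x | c x]; rewrite HA => H; rewrite -(eqn_add2l (#|V| - 1)) H addn1 subn1 prednK.
case/cards1P=> w Hw; exists w; rewrite /st0; congr pair.
apply/ffunP=> z; rewrite ffunE.
move/setP: Hw => /(_ z); rewrite !inE => Hz; apply/eqP; by rewrite eq_sym -Hz negbK.
Qed.


Local Open Scope ring_scope.

Lemma dcoef_st1 e t : dcoef ends (st1 e) t = 0.
Proof.
rewrite /dcoef big1 // => k; rewrite inE => ke; by rewrite dstate_st1.
Qed.

Lemma dcoef_st0 w t : dcoef ends (st0 w) t =
  \sum_k (if ((w == (ends k).1) || (w == (ends k).2)) && (st1 k == t) then 1 else 0).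
Proof.
rewrite /dcoef; apply: eq_big => [k|k _]; first by rewrite inE.
have -> : #|[set f in (st0 w).1 | (f < k)%N]| = 0%N.
  by apply/eqP; rewrite cards_eq0; apply/eqP/setP=> f; rewrite !inE.
rewrite expr0 dstate_st0; by case: (_ || _).
Qed.

Lemma dif_C1 f : inC ends 1 (#|V| - 1) f -> dif ends f = 0.
Proof.
move=> Hf; apply/ffunP=> t; rewrite !ffunE big1 // => u _.
case: (eqVneq (f u) 0) => [->|/Hf]; first by rewrite mul0r.
case/and3P=> Hv /eqP H1 /eqP Hj; have [e ->] := class1 Hv H1 Hj.
by rewrite dcoef_st1 mulr0.
Qed.

Lemma dif_C0 g : (0 < #|V|)%N -> inC ends 0 (#|V| - 1) g -> forall t,
  dif ends g t = \sum_k (if st1 k == t then Mvec ends (fun w => g (st0 w)) k else 0).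
Proof.
move=> Vpos Hg t; rewrite ffunE.
have -> : \sum_u g u * dcoef ends u t = \sum_(u in [set st0 x | x : V]) g u * dcoef ends u t.
  rewrite [RHS]big_mkcond; apply: eq_bigr => u _; case: ifP => // Hu.
  case: (eqVneq (g u) 0) => [->|/Hg]; first by rewrite mul0r.
  case/and3P=> Hv /eqP H1 /eqP Hj; have [w Hw] := class0 Vpos Hv H1 Hj.
  by move: Hu; rewrite Hw imset_f.
rewrite big_imset /=; last by move=> x y _ _; apply: st0_inj.
rewrite (eq_bigl xpredT) //.
under eq_bigr => w _ do rewrite dcoef_st0 mulr_sumr.
rewrite exchange_big /=; apply: eq_bigr => k _.
case: (st1 k == t); last by rewrite big1 // => w _; rewrite andbF mulr0.
have Hyx : (ends k).2 != (ends k).1 by rewrite eq_sym loopfree.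
rewrite (bigD1 (ends k).1) // (bigD1 (ends k).2) //=. rewrite !eqxx /= orbT /= !mulr1.
rewrite big1 ?addr0 // => w /andP[Hw1 Hw2].
by rewrite (negbTE Hw1) (negbTE Hw2) mulr0.
Qed.

Lemma H_from_coker (A : zmodType) : (0 < #|V|)%N -> coker_iso ends A ->
  H_iso ends 1 (#|V| - 1) A.
Proof.
move=> Vpos [Phi [Pext Padd Psurj Pker]].
exists (fun f => Phi (fun k => f (st1 k))); split.
- move=> f g _ _; rewrite -Padd; apply: Pext => k; by rewrite !ffunE.
- move=> a; have [h <-] := Psurj a.
  exists [ffun t => \sum_k (if st1 k == t then h k else 0)]; last first.
    apply: Pext => k; rewrite ffunE -big_mkcond /= (big_pred1 k) //.
    by move=> k'; rewrite /= (inj_eq st1_inj).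
  have HC : inC ends 1 (#|V| - 1) [ffun t => \sum_k (if st1 k == t then h k else 0)].
    move=> u; rewrite ffunE; case: (pickP (fun k => st1 k == u)) => [k /eqP <- _|H].
      by rewrite valid_st1 cards1 jdeg_st1 !eqxx.
    by rewrite big1 ?eqxx // => k _; rewrite H.
  by split => //; apply: dif_C1.
- move=> f [Hf _]; split.
  + move/Pker=> [a Ha] /=.
    set g := [ffun u => \sum_w (if u == st0 w then a w else 0)].
    have Hg0 w : g (st0 w) = a w.
      rewrite ffunE -big_mkcond /= (big_pred1 w) //.
      by move=> w'; rewrite /= eq_sym (inj_eq st0_inj).
    have HgC : inC ends 0 (#|V| - 1) g.
      move=> u; rewrite ffunE; case: (pickP (fun w => u == st0 w)) => [w /eqP -> _|H].
        by rewrite valid_st0 cards0 jdeg_st0 !eqxx.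
      by rewrite big1 ?eqxx // => w _; rewrite H.
    exists g; split => //; apply/ffunP=> t; rewrite dif_C0 //.
    case: (pickP (fun k => st1 k == t)) => [k /eqP <-|H].
      rewrite -big_mkcond (big_pred1 k); last by move=> k'; rewrite /= (inj_eq st1_inj).
      rewrite Ha /Mvec !Hg0 //.
    rewrite big1; last by move=> k _; rewrite H.
    case: (eqVneq (f t) 0) => [->//|/Hf /and3P[Hv /eqP H1 /eqP Hj]].
    by have [e He] := class1 Hv H1 Hj; move: (H e); rewrite He eqxx.
  + case=> g [Hg Hd]; apply/Pker; exists (fun w => g (st0 w)) => k.
    rewrite -Hd dif_C0 // -big_mkcond (big_pred1 k) //.
    by move=> k'; rewrite /= (inj_eq st1_inj).
Qed.

End States.

Lemma no_edge_adj (V : finType) (ends : 'I_0 -> V * V) x y : adj ends setT x y = false.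
Proof. by apply/existsP=> [][[]]. Qed.

Unset Implicit Arguments.

Theorem corollary3p2 (V : finType) (m : nat) (ends : 'I_m -> V * V) :
  simple_graph ends -> connected_graph ends -> (0 < #|V|)%N ->
  (bipartite ends ->
     H_iso ends 1 (#|V| - 1) ('rV[int]_(m + 1 - #|V|)%N)) /\
  (has_odd_cycle ends ->
     H_iso ends 1 (#|V| - 1) ('rV[int]_(m + 1 - #|V| - 1)%N * 'Z_2)%type).
Proof.
move=> Hs Hc Vpos.
have [r _] := card_gt0P Vpos.
case: m ends Hs Hc => [|m] ends Hs Hc; last first.
  split=> H; apply: H_from_coker => //.
    exact: coker_bip Hc r ord0 H.
  exact: coker_odd Hc r ord0 H.
split; last first.
  case=> p [_ _ Hsz Hcy]; exfalso.
  case: p Hsz Hcy => [//|x [//|y p]] _ /= /andP[].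
  by rewrite no_edge_adj.
move=> _; apply: H_from_coker => //.
have V1 : #|V| = 1%N.
  apply/eqP; rewrite eqn_leq Vpos andbT; apply/card_le1_eqP => x y _ _.
  have /connectP[[|z p] /= Hp ->] := Hc x y => //.
  by move: Hp; rewrite no_edge_adj.
exists (fun _ => 0%R); split.
- by [].
- by move=> h1 h2; rewrite subr0.
- move=> z; exists (fun _ => 0%R); apply/rowP=> i; exfalso; have := ltn_ord i.
  have : (0 + 1 - #|V| = 0)%N by rewrite V1.
  lia.
- by move=> h; split => // _; exists (fun _ => 0%R) => [][].
Qed.
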